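(* Let $P$ be the transition matrix of a reversible and ergodic Markov chain on $V$ with stationary distribution $\pi$ and mixing rate $t^*$. For the billiard router model for $P$, with any initial configuration, $$\left|\chi^{(T)}_w-\mu^{(T)}_w\right|\le\frac{6\pi_w}{\pi_{\min}}\,t^*\,(\Delta-1)$$ for all $w\in V$ and $T\ge0$.
   Context: Let $V=\{1,\dots,N\}$ and let $P\in\mathbb{R}_{\ge 0}^{N\times N}$ be an ergodic (irreducible, aperiodic) stochastic matrix with stationary distribution $\pi$; $\pi_{\min}=\min_v\pi_v$; reversible means $\pi_uP_{u,v}=\pi_vP_{v,u}$ for all $u,v$. For $v\in V$ let $\mathcal N(v)=\{u: P_{v,u}>0\}$, $\delta(v)=|\mathcal N(v)|$, $\Delta=\max_v\delta(v)$. Total variation distance $d_{TV}(\xi,\zeta)=\frac12\|\xi-\zeta\|_1$; mixing time $\tau(\varepsilon)=\max_{v}\min\{t\ge0: d_{TV}(P^t_{v,\cdot},\pi)\le\varepsilon\}$; mixing rate $t^*=\tau(1/4)$. A functional-router model consists of functions $\sigma_v:\mathbb{Z}_{\ge0}\to\mathcal N(v)$; write $I_{v,u}[z,z')=|\{j\in\{z,\dots,z'-1\}:\sigma_v(j)=u\}|$ (zero if $z'\le z$). Given $\chi^{(0)}\in\mathbb{Z}_{\ge0}^N$, set $Z^{(t)}_{v,u}=I_{v,u}\big[\sum_{s=0}^{t-1}\chi^{(s)}_v,\sum_{s=0}^{t}\chi^{(s)}_v\big)$, $\chi^{(t+1)}_u=\sum_vZ^{(t)}_{v,u}$, $\mu^{(0)}=\chi^{(0)}$,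 $\mu^{(t)}=\mu^{(0)}P^t$. The billiard router is defined recursively: $\sigma_v(i)$ is an element $u\in\mathcal N(v)$ minimizing $(I_{v,u}[0,i)+1)/P_{v,u}$ (ties broken arbitrarily). It is known (billiard sequences) that for this router $|I_{v,u}[z,z')-(z'-z)P_{v,u}|\le 1+(\delta(v)-2)P_{v,u}$ for all $v,u$ and $z'>z\ge0$. *)

(* Defs.v *)
From HB Require Import structures.
From mathcomp Require Import all_boot all_order all_algebra.
Set Implicit Arguments. Unset Strict Implicit. Unset Printing Implicit Defensive.
Import Order.TTheory GRing.Theory Num.Theory.
Local Open Scope ring_scope.

Section MC.
Variables (R : realFieldType) (n : nat).
Local Notation V := 'I_n.+1.
Implicit Types (P : 'M[R]_n.+1) (pi : 'rV[R]_n.+1).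

Definition stochastic P :=
  (forall u v, 0 <= P u v) /\ (forall u, \sum_v P u v = 1).

Definition irreducible P := forall u v, exists t : nat, 0 < (P ^+ t) u v.

(* aperiodic: gcd{t >= 1 : P^t_{vv} > 0} = 1 for every v, i.e. no d > 1
   divides all return times *)
Definition aperiodic P :=
  forall v (d : nat), (1 < d)%N ->
    exists t : nat, [/\ (0 < t)%N, 0 < (P ^+ t) v v & ~~ (d %| t)%N].

Definition ergodic P := irreducible P /\ aperiodic P.

Definition stationary_distribution P pi :=
  [/\ forall v, 0 <= pi 0 v, \sum_v pi 0 v = 1 & pi *m P = pi].

Definition reversible P pi := forall u v, pi 0 u * P u v = pi 0 v * P v u.

Definition pi_min pi : R := \big[Order.min/pi 0 ord0]_(v < n.+1) pi 0 v.

Definition deg P (v : V) : nat := #|[set u | 0 < P v u]|.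
Definition max_deg P : nat := \max_(v < n.+1) deg P v.

Definition dTV (xi zeta : V -> R) : R := 2^-1 * \sum_u `|xi u - zeta u|.

Definition dist_to_stat P pi (t : nat) (v : V) : R :=
  dTV (fun u => (P ^+ t) v u) (fun u => pi 0 u).

(* tau = tau(eps) = max_v min {t : dTV(P^t_{v,.}, pi) <= eps} *)
Definition is_mixing_time P pi (eps : R) (tau : nat) :=
  (forall v, exists t : nat, (t <= tau)%N /\ dist_to_stat P pi t v <= eps) /\
  (exists v, forall t : nat, (t < tau)%N -> eps < dist_to_stat P pi t v).

Definition is_mixing_rate P pi (tstar : nat) := is_mixing_time P pi (4^-1) tstar.

Definition Icount (sigma : V -> nat -> V) (v u : V) (z z' : nat) : nat :=
  (\sum_(z <= j < z') (sigma v j == u))%N.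

Definition billiard_router P (sigma : V -> nat -> V) :=
  forall v (i : nat), 0 < P v (sigma v i) /\
    forall u, 0 < P v u ->
      ((Icount sigma v (sigma v i) 0 i).+1)%:R / P v (sigma v i)
        <= ((Icount sigma v u 0 i).+1)%:R / P v u.

(* state at time t: (chi^(t), cumulative sum_{s<t} chi^(s)) *)
Fixpoint router_state (sigma : V -> nat -> V) (chi0 : V -> nat) (t : nat)
  : (V -> nat) * (V -> nat) :=
  match t with
  | 0 => (chi0, fun _ => 0%N)
  | t'.+1 =>
      let: (c, Sc) := router_state sigma chi0 t' in
      (fun u => (\sum_(v < n.+1) Icount sigma v u (Sc v) (Sc v + c v))%N,
       fun v => (Sc v + c v)%N)
  end.

Definition chi (sigma : V -> nat -> V) (chi0 : V -> nat) (t : nat) : V -> nat :=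
  (router_state sigma chi0 t).1.

Definition mu P (chi0 : V -> nat) (t : nat) : 'rV[R]_n.+1 :=
  (\row_v (chi0 v)%:R) *m P ^+ t.

End MC.

(* Main.v *)
Require Import Defs.
From HB Require Import structures.
From mathcomp Require Import all_boot all_order all_algebra.
From mathcomp Require Import ring lra.
Import Order.TTheory GRing.Theory Num.Theory.
Local Open Scope ring_scope.
Set Implicit Arguments. Unset Strict Implicit. Unset Printing Implicit Defensive.

Section Basics.
Variables (R : realFieldType) (n : nat) (P : 'M[R]_n.+1).
Hypothesis Pst : stochastic P.

Lemma P_ge0 u v : 0 <= P u v. Proof. by case: Pst. Qed.
Lemma P_row u : \sum_v P u v = 1. Proof. by case: Pst. Qed.

Lemma sum_delta (u : 'I_n.+1) : \sum_v ((u == v)%:R : R) = 1.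
Proof.
rewrite (bigD1 u) //= eqxx big1 ?addr0 // => v /negbTE.
by rewrite eq_sym => ->.
Qed.

Lemma Pt_ge0 t u v : 0 <= (P ^+ t) u v.
Proof.
elim: t u v => [|t IH] u v; first by rewrite expr0 mxE ler0n.
rewrite exprSr mxE; apply: sumr_ge0 => k _; apply: mulr_ge0 => //; exact: P_ge0.
Qed.

Lemma Pt_row t u : \sum_v (P ^+ t) u v = 1.
Proof.
elim: t u => [|t IH] u; first by under eq_bigr do rewrite expr0 mxE; exact: sum_delta.
rewrite exprS; under eq_bigr do rewrite mxE.
rewrite exchange_big /=; under eq_bigr do rewrite -mulr_sumr IH mulr1.
exact: P_row.
Qed.

Lemma P_le1 u v : P u v <= 1.
Proof.
rewrite -(P_row u) (bigD1 v) //= lerDl; apply: sumr_ge0 => *; exact: P_ge0.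
Qed.

End Basics.


Section Stat.
Variables (R : realFieldType) (n : nat) (P : 'M[R]_n.+1) (pi : 'rV[R]_n.+1).
Hypothesis Pst : stochastic P.
Hypothesis Pirr : irreducible P.
Hypothesis Hpi : stationary_distribution P pi.
Hypothesis Hrev : reversible P pi.

Lemma pi_ge0 u : 0 <= pi 0 u. Proof. by case: Hpi. Qed.
Lemma pi_sum : \sum_u pi 0 u = 1. Proof. by case: Hpi. Qed.

Lemma pi_Pt t : pi *m P ^+ t = pi.
Proof.
case: Hpi => _ _ H; elim: t => [|t IH]; first by rewrite expr0 mulmx1.
by rewrite exprSr mulmxA IH.
Qed.

Lemma pi_gt0 u : 0 < pi 0 u.
Proof.
have [v Hv] : exists v, 0 < pi 0 v.
  apply/existsP; apply: contraT; rewrite negb_exists => /forallP H.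
  have : \sum_u pi 0 u = 0.
    apply: big1 => w _; apply/eqP; rewrite eq_le pi_ge0 andbT.
    by have := H w; rewrite -leNgt.
  by rewrite pi_sum => /eqP; rewrite oner_eq0.
have [t Ht] := Pirr v u.
have := congr1 (fun M : 'rV[R]_n.+1 => M 0 u) (pi_Pt t); rewrite mxE => <-.
rewrite (bigD1 v) //= ltr_pwDl ?mulr_gt0 //.
apply: sumr_ge0 => k _; apply: mulr_ge0; [exact: pi_ge0| exact: Pt_ge0].
Qed.

Lemma pimin_le u : pi_min pi <= pi 0 u.
Proof. exact: bigmin_le. Qed.

Lemma pimin_gt0 : 0 < pi_min pi.
Proof. apply/bigmin_gtP; split => [|i _]; exact: pi_gt0. Qed.

Lemma rev_Pt t u v : pi 0 u * (P ^+ t) u v = pi 0 v * (P ^+ t) v u.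
Proof.
elim: t u v => [|t IH] u v.
  rewrite expr0 !mxE eq_sym; case: eqP => [->|] //; by rewrite !mulr0.
rewrite [in LHS]exprS [in RHS]exprSr !mxE mulr_sumr mulr_sumr; apply: eq_bigr => k _.
by rewrite mulrA Hrev -mulrA mulrCA IH mulrA [_ * P k u]mulrC.
Qed.

Lemma colsum_le u : \sum_v P v u <= pi 0 u / pi_min pi.
Proof.
have H v : P v u = pi 0 u * P u v / pi 0 v.
  by rewrite Hrev mulrC mulrA mulVf ?mul1r // gt_eqF // pi_gt0.
rewrite -[pi 0 u / _]mulr1 -(P_row Pst u) mulr_sumr.
apply: ler_sum => v _; rewrite H [_ / pi_min _ * _]mulrAC.
apply: ler_wpM2l; first by apply: mulr_ge0; [exact: pi_ge0|exact: P_ge0].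
by rewrite lef_pV2 ?posrE ?pi_gt0 ?pimin_gt0 // pimin_le.
Qed.

End Stat.


Section Contract.
Variables (R : realFieldType) (n : nat).
Local Notation V := 'I_n.+1.
Variables (Q : 'M[R]_n.+1).
Hypothesis Q_ge0 : forall u v, 0 <= Q u v.
Hypothesis Q_row : forall u, \sum_v Q u v = 1.

Lemma contract1 (mu : V -> R) :
  \sum_x `|\sum_u mu u * Q u x| <= \sum_u `|mu u|.
Proof.
apply: (le_trans (y := \sum_x \sum_u `|mu u| * Q u x)).
  apply: ler_sum => x _; apply: (le_trans (ler_norm_sum _ _ _)).
  by apply: ler_sum => u _; rewrite normrM (ger0_norm (Q_ge0 _ _)).
rewrite exchange_big /=; apply: ler_sum => u _.
by rewrite -mulr_sumr Q_row mulr1.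
Qed.

Lemma contractD (mu : V -> R) (D : R) :
  \sum_u mu u = 0 ->
  (forall u v, \sum_x `|Q u x - Q v x| <= 2%:R * D) ->
  \sum_x `|\sum_u mu u * Q u x| <= D * \sum_u `|mu u|.
Proof.
move=> Hmu HD.
pose p u := (`|mu u| + mu u) / 2%:R.
pose q u := (`|mu u| - mu u) / 2%:R.
have two0 : (2%:R : R) != 0 by rewrite pnatr_eq0.
have pq u : mu u = p u - q u.
  rewrite /p /q; lra.
have p0 u : 0 <= p u.
  by have := ler_norm (- mu u); rewrite normrN /p => ?; lra.
have q0 u : 0 <= q u.
  by have := ler_norm (mu u); rewrite /q => ?; lra.
pose m := \sum_u p u.
have mq : \sum_u q u = m.
  have : m - \sum_u q u = 0.
    by rewrite /m -sumrB -[RHS]Hmu; apply: eq_bigr => u _; rewrite pq.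
  by move=> H; apply/eqP; rewrite eq_sym -subr_eq0 H.
have mmu : \sum_u `|mu u| = 2%:R * m.
  have -> : 2%:R * m = m + \sum_u q u by rewrite mq; lra.
  rewrite /m -big_split /=; apply: eq_bigr => u _; rewrite /p /q; lra.
have key x : m * (\sum_u mu u * Q u x) =
    \sum_u \sum_v p u * q v * (Q u x - Q v x).
  have h1 : \sum_u \sum_v p u * q v * Q u x = m * \sum_u p u * Q u x.
    rewrite mulr_sumr; apply: eq_bigr => u _; rewrite -mq mulr_suml.
    by apply: eq_bigr => v _; ring.
  have h2 : \sum_u \sum_v p u * q v * Q v x = m * \sum_v q v * Q v x.
    rewrite exchange_big mulr_sumr; apply: eq_bigr => v _ /=; rewrite /m mulr_suml.
    by apply: eq_bigr => u _; ring.
  transitivity (\sum_u \sum_v (p u * q v * Q u x - p u * q v * Q v x)); last first.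
    by apply: eq_bigr => u _; apply: eq_bigr => v _; ring.
  rewrite [RHS](eq_bigr (fun u => \sum_v p u * q v * Q u x - \sum_v p u * q v * Q v x)); last first.
    by move=> u _; rewrite -sumrB.
  rewrite sumrB h1 h2 -mulrBr -sumrB; congr (_ * _); apply: eq_bigr => u _; rewrite pq; ring.
have m0 : 0 <= m by apply: sumr_ge0 => u _.
have main : m * \sum_x `|\sum_u mu u * Q u x| <= m * (D * \sum_u `|mu u|).
  rewrite mulr_sumr.
  under eq_bigr do rewrite -(ger0_norm m0) -normrM (ger0_norm m0) key.
  apply: (le_trans (y := \sum_x \sum_u \sum_v p u * q v * `|Q u x - Q v x|)).
    apply: ler_sum => x _; apply: (le_trans (ler_norm_sum _ _ _)); apply: ler_sum => u _.
    apply: (le_trans (ler_norm_sum _ _ _)); apply: ler_sum => v _.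
    by rewrite normrM ger0_norm // mulr_ge0.
  rewrite exchange_big /=; apply: (le_trans (y := \sum_u \sum_v p u * q v * (2%:R * D))).
    apply: ler_sum => u _; rewrite exchange_big /=; apply: ler_sum => v _.
    by rewrite -mulr_sumr; apply: ler_wpM2l; [exact: mulr_ge0|exact: HD].
  rewrite mmu.
  have -> : \sum_u \sum_v p u * q v * (2%:R * D) = m * m * (2%:R * D).
    transitivity (\sum_u p u * m * (2%:R * D)).
      apply: eq_bigr => u _; rewrite -mq mulr_sumr mulr_suml.
      by apply: eq_bigr => v _; ring.
    by rewrite -mulr_suml; congr (_ * _); rewrite -mulr_suml.
  by rewrite le_eqVlt; apply/orP; left; apply/eqP; ring.
have [mpos|] := ltrP 0 m; first by rewrite -(ler_pM2l mpos).
move=> mle; have mz : m = 0 by apply/eqP; rewrite eq_le mle m0.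
have muz u : mu u = 0.
  apply/eqP; rewrite -normr_eq0; apply/eqP.
  move: mmu; rewrite mz mulr0 => /eqP; rewrite psumr_eq0 // => /allP H.
  by apply/eqP; apply: H; rewrite mem_index_enum.
rewrite mmu mz !mulr0 big1 // => x _; rewrite big1 ?normr0 // => u _; by rewrite muz mul0r.
Qed.
End Contract.


Lemma sum_split_nat (R : realFieldType) (a b : nat) (F : nat -> R) :
  \sum_(0 <= i < a + b) F i = \sum_(0 <= i < a) F i + \sum_(0 <= i < b) F (i + a)%N.
Proof.
rewrite (big_cat_nat _ (n := a)) ?leq_addr //; congr (_ + _).
by rewrite -{1}(add0n a) big_addn addKn.
Qed.

Lemma sum_const_le (R : realFieldType) (m : nat) (F : nat -> R) (c : R) :
  (forall i, F i <= c) -> \sum_(0 <= i < m) F i <= c * m%:R.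
Proof.
move=> H; elim: m => [|m IH]; first by rewrite big_geq // mulr0.
by rewrite big_nat_recr //= -addn1 natrD mulrDr mulr1; apply: lerD.
Qed.

Section Mix.
Variables (R : realFieldType) (n : nat) (P : 'M[R]_n.+1) (pi : 'rV[R]_n.+1).
Hypothesis Pst : stochastic P.
Hypothesis Hpi : stationary_distribution P pi.
Local Notation V := 'I_n.+1.

Definition A (w : V) (s : nat) : R := \sum_u `|(P ^+ s) w u - pi 0 u|.

Lemma pi_Pt' t : pi *m P ^+ t = pi.
Proof.
case: Hpi => _ _ H; elim: t => [|t IH]; first by rewrite expr0 mulmx1.
by rewrite exprSr mulmxA IH.
Qed.

Lemma A_ge0 w s : 0 <= A w s. Proof. by apply: sumr_ge0 => *. Qed.

Lemma A_le2 w s : A w s <= 2%:R.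
Proof.
apply: (le_trans (y := \sum_u ((P ^+ s) w u + pi 0 u))).
  apply: ler_sum => u _; apply: (le_trans (ler_normB _ _)).
  by rewrite !ger0_norm //; [case: Hpi| exact: Pt_ge0].
by rewrite big_split /= Pt_row //; case: Hpi => _ -> _.
Qed.

Lemma A_shift_eq w s m x :
  (P ^+ (s + m)) w x - pi 0 x = \sum_u ((P ^+ s) w u - pi 0 u) * (P ^+ m) u x.
Proof.
rewrite exprD mxE -[in pi 0 x](pi_Pt' m) mxE -sumrB.
by apply: eq_bigr => u _; rewrite mulrBl.
Qed.

Lemma A_sum0 w s : \sum_u ((P ^+ s) w u - pi 0 u) = 0.
Proof. by rewrite sumrB Pt_row //; case: Hpi => _ -> _; rewrite subrr. Qed.

Lemma A_mono w s : A w s.+1 <= A w s.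
Proof.
rewrite /A -(addn1 s); under eq_bigr do rewrite A_shift_eq.
apply: contract1 => [u v|u]; [exact: Pt_ge0| exact: Pt_row].
Qed.

Lemma A_monoW w s s' : (s <= s')%N -> A w s' <= A w s.
Proof.
move/subnKC <-; elim: (s' - s)%N => [|k IH]; first by rewrite addn0.
by rewrite addnS; apply: le_trans IH; exact: A_mono.
Qed.

Lemma A_half w s m : (forall v, A v m <= 2^-1) -> A w (s + m) <= A w s / 2%:R.
Proof.
move=> Hm; rewrite /A; under eq_bigr do rewrite A_shift_eq.
rewrite mulrC; apply: contractD; rewrite ?A_sum0 // => u v.
apply: (le_trans (y := A u m + A v m)); last first.
  by have := Hm u; have := Hm v; lra.
rewrite /A -big_split /=; apply: ler_sum => x _.
by rewrite [X in _ <= _ + X]distrC; apply: ler_distD.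
Qed.


Variable tstar : nat.
Hypothesis Hmix : is_mixing_rate P pi tstar.

Lemma A_tstar v : A v tstar <= 2^-1.
Proof.
case: Hmix => H _; have [t [Ht Hd]] := H v.
apply: le_trans (A_monoW v Ht) _.
move: Hd; rewrite /dist_to_stat /dTV -/(A v t) => Hd; lra.
Qed.

Lemma A_sum_bound w T : \sum_(0 <= s < T) A w s <= 3%:R * tstar%:R.
Proof.
have [t0|tpos] := eqVneq tstar 0%N.
  rewrite t0 mulr0; apply: le_trans (sum_const_le _ (c := 0) _) _; last by rewrite mul0r.
  move=> s; have := A_half w s A_tstar; rewrite t0 addn0 => h.
  have := A_ge0 w s; lra.
have tp : (0 < tstar)%N by rewrite lt0n.
have Hhalf s : A w (s + tstar) <= 2^-1.
  by apply: le_trans (A_tstar w); apply: A_monoW; rewrite leq_addl.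
have H m : \sum_(0 <= s < m) A w (s + tstar) <= tstar%:R.
  elim/ltn_ind: m => m IH.
  have [Hm|Hm] := leqP m tstar.
    apply: le_trans (sum_const_le _ (c := 2^-1) Hhalf) _.
    have : (m%:R <= tstar%:R :> R) by rewrite ler_nat.
    have : (0 <= m%:R :> R) by [].
    lra.
  rewrite -(subnKC (ltnW Hm)) sum_split_nat.
  have h1 : \sum_(0 <= s < tstar) A w (s + tstar) <= 2^-1 * tstar%:R.
    exact: sum_const_le.
  have h2 : \sum_(0 <= i < m - tstar) A w (i + tstar + tstar) <=
            2^-1 * \sum_(0 <= i < m - tstar) A w (i + tstar).
    rewrite mulr_sumr; apply: ler_sum => i _.
    by rewrite mulrC; apply: A_half; exact: A_tstar.
  have h3 : \sum_(0 <= i < m - tstar) A w (i + tstar) <= tstar%:R.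
    by apply: IH; rewrite ltn_subrL tp; apply: leq_trans Hm.
  lra.
have e1 := sum_split_nat T tstar (A w).
have e2 := sum_split_nat tstar T (A w).
rewrite addnC e2 in e1.
have g1 : 0 <= \sum_(0 <= i < tstar) A w (i + T) by apply: sumr_ge0 => *; exact: A_ge0.
have g2 : \sum_(0 <= i < tstar) A w i <= 2%:R * tstar%:R.
  by apply: sum_const_le => s; exact: A_le2.
have g3 := H T.
lra.
Qed.
End Mix.


Section Billiard.
Variables (R : realFieldType) (n : nat) (P : 'M[R]_n.+1).
Local Notation V := 'I_n.+1.
Variable sigma : V -> nat -> V.
Hypothesis Pst : stochastic P.
Hypothesis Hbil : billiard_router P sigma.
Variable v : V.

Local Notation I u z := (Icount sigma v u 0 z).

Lemma I_succ u z : I u z.+1 = (I u z + (sigma v z == u))%N.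
Proof. by rewrite /Icount big_nat_recr. Qed.

Lemma Icount_out u a b : ~~ (0 < P v u) -> Icount sigma v u a b = 0%N.
Proof.
move=> Hu; rewrite /Icount big_nat_cond big1 // => j _.
case: eqP => // Hj; case: (Hbil v j); rewrite Hj => H _; by rewrite H in Hu.
Qed.

Lemma I_sum z : (\sum_u I u z)%N = z.
Proof.
rewrite /Icount exchange_big /= (eq_bigr (fun _ => 1%N)).
  by rewrite sum_nat_const_nat muln1 subn0.
move=> j _.
rewrite (bigD1 (sigma v j)) //= eqxx big1 // => u /negbTE.
by rewrite eq_sym => ->.
Qed.

Lemma Inv z u x : 0 < P v u -> 0 < P v x ->
  (I u z)%:R * P v x <= ((I x z)%:R + 1) * P v u.
Proof.
elim: z u x => [|z IH] u x Hu Hx.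
  by rewrite /Icount !big_geq //= mul0r add0r mul1r ltW.
have [Hc Hmin] := Hbil v z.
set c := sigma v z in Hc Hmin *.
have Hmul y : 0 < P v y -> ((I c z)%:R + 1) * P v y <= ((I y z)%:R + 1) * P v c.
  move=> Hy; have := Hmin y Hy.
  by rewrite ler_pdivrMr // mulrAC ler_pdivlMr // !mulrSr.
rewrite !I_succ !natrD.
have IHux := IH u x Hu Hx.
case: (eqVneq c u) => [<-|cu]; case: (eqVneq c x) => [<-|cx] //=.
- have := ltW Hc; nra.
- by rewrite addr0; exact: Hmul x Hx.
- have := IH u c Hu Hc; have := ltW Hu; nra.
- by rewrite !addr0.
Qed.


Local Notation S := [set u | 0 < P v u].

Lemma supp_sumP : \sum_(u in S) P v u = 1.
Proof.
rewrite -(P_row Pst v) [RHS](bigID (mem S)) /= [X in _ = _ + X]big1 ?addr0.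
  by apply: eq_bigl => u; rewrite inE.
move=> u; rewrite inE => Hu; apply/eqP; rewrite eq_le P_ge0 // andbT.
by rewrite leNgt.
Qed.

Lemma supp_sumI z : \sum_(u in S) ((I u z)%:R : R) = z%:R.
Proof.
rewrite -{2}(I_sum z) natr_sum [RHS](bigID (mem S)) /= [X in _ = _ + X]big1 ?addr0.
  by apply: eq_bigl => u; rewrite inE.
by move=> u; rewrite inE => Hu; rewrite Icount_out.
Qed.

Lemma supp_card : \sum_(u in S) (1 : R) = (deg P v)%:R.
Proof. by rewrite sumr_const. Qed.

Lemma I_upper z x : 0 < P v x ->
  (I x z)%:R <= (z%:R + (deg P v)%:R - 1) * P v x.
Proof.
move=> Hx.
have E : \sum_(u in S) (((I u z)%:R + 1) * P v x - (I x z)%:R * P v u)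
         = (z%:R + (deg P v)%:R) * P v x - (I x z)%:R.
  rewrite sumrB -mulr_suml -mulr_sumr big_split /= supp_sumI supp_card supp_sumP.
  by rewrite mulr1.
have G : P v x <= \sum_(u in S) (((I u z)%:R + 1) * P v x - (I x z)%:R * P v u).
  rewrite (bigD1 x) ?inE //= -{1}(addr0 (P v x)); apply: lerD.
    by rewrite le_eqVlt; apply/orP; left; apply/eqP; ring.
  apply: sumr_ge0 => u; rewrite inE => /andP [Hu _].
  by rewrite subr_ge0; apply: Inv.
rewrite E in G; lra.
Qed.

Lemma I_lower z x : 0 < P v x ->
  (z%:R + 1) * P v x - 1 <= (I x z)%:R.
Proof.
move=> Hx.
have E : \sum_(u in S) (((I x z)%:R + 1) * P v u - (I u z)%:R * P v x)
         = ((I x z)%:R + 1) - z%:R * P v x.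
  by rewrite sumrB -mulr_suml -mulr_sumr supp_sumI supp_sumP mulr1.
have G : P v x <= \sum_(u in S) (((I x z)%:R + 1) * P v u - (I u z)%:R * P v x).
  rewrite (bigD1 x) ?inE //= -{1}(addr0 (P v x)); apply: lerD.
    by rewrite le_eqVlt; apply/orP; left; apply/eqP; ring.
  apply: sumr_ge0 => u; rewrite inE => /andP [Hu _].
  by rewrite subr_ge0; apply: Inv.
rewrite E in G; lra.
Qed.

Lemma disc u a c : 0 < P v u ->
  `|(Icount sigma v u a (a + c))%:R - c%:R * P v u| <= 1 + ((deg P v)%:R - 2%:R) * P v u.
Proof.
move=> Hu.
have split : (I u (a + c) = I u a + Icount sigma v u a (a + c))%N.
  by rewrite /Icount (big_cat_nat _ (n := a)) ?leq_addr.
have h : (Icount sigma v u a (a + c))%:R = (I u (a + c))%:R - (I u a)%:R :> R.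
  by rewrite split natrD addrC addKr.
rewrite h.
have := I_upper (a + c) Hu; have := I_lower (a + c) Hu.
have := I_upper a Hu; have := I_lower a Hu.
rewrite natrD => h1 h2 h3 h4.
rewrite ler_norml; apply/andP; split; nra.
Qed.

End Billiard.


Section Deg.
Variables (R : realFieldType) (n : nat) (P : 'M[R]_n.+1) (pi : 'rV[R]_n.+1).
Local Notation V := 'I_n.+1.
Hypothesis Pst : stochastic P.
Hypothesis Pirr : irreducible P.
Hypothesis Hpi : stationary_distribution P pi.
Hypothesis Hrev : reversible P pi.

Lemma deg_le v : (deg P v <= max_deg P)%N.
Proof. exact: (leq_bigmax v). Qed.

Lemma deg_ge1 v u : 0 < P v u -> (1 <= deg P v)%N.
Proof. by move=> H; rewrite /deg card_gt0; apply/set0Pn; exists u; rewrite inE. Qed.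

Lemma maxdeg_ge1 : (1 <= max_deg P)%N.
Proof.
have [u Hu] : exists u, 0 < P ord0 u.
  apply/existsP; apply: contraT; rewrite negb_exists => /forallP H.
  have : \sum_u P ord0 u = 0.
    apply: big1 => w _; apply/eqP; rewrite eq_le P_ge0 // andbT.
    by have := H w; rewrite -leNgt.
  by rewrite P_row // => /eqP; rewrite oner_eq0.
exact: leq_trans (deg_ge1 Hu) (deg_le _).
Qed.

Lemma deg1_P1 v u : deg P v = 1%N -> 0 < P v u -> P v u = 1.
Proof.
move=> H1 Hu; have /cards1P [x Hx] : #|[set y | 0 < P v y]| == 1%N by rewrite -/(deg P v) H1.
have := supp_sumP Pst v; rewrite Hx big_set1 => <-.
have : u \in [set y | 0 < P v y] by rewrite inE.
by rewrite Hx inE => /eqP ->.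
Qed.

Lemma indeg_le u : (#|[set v | (0 < P v u)%R]| <= max_deg P)%N.
Proof.
apply: leq_trans (deg_le u); rewrite /deg; apply: subset_leq_card.
apply/subsetP => v; rewrite !inE => H.
have := Hrev u v; have := pi_gt0 Pst Pirr Hpi u; have := pi_gt0 Pst Pirr Hpi v.
move=> h1 h2 h3.
rewrite lt_neqAle P_ge0 // andbT; apply/eqP => h0.
move: h3; rewrite -h0 mulr0 => h3.
by have := mulr_gt0 h1 H; rewrite -h3 ltxx.
Qed.

Definition bcoef (v u : V) : R :=
  if 0 < P v u then 1 + ((deg P v)%:R - 2%:R) * P v u else 0.

Lemma bcoef_sum u :
  \sum_v bcoef v u <= 2%:R * ((max_deg P)%:R - 1) * (pi 0 u / pi_min pi).
Proof.
have r1 : 1 <= pi 0 u / pi_min pi.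
  by rewrite ler_pdivlMr ?mul1r ?pimin_le // (pimin_gt0 Pst Pirr Hpi).
have [D1|D2] := leqP (max_deg P) 1.
  have D : max_deg P = 1%N by apply/eqP; rewrite eqn_leq D1 maxdeg_ge1.
  rewrite big1 ?D ?subrr ?mulr0 ?mul0r // => v _; rewrite /bcoef.
  case: ifP => // Hv.
  have dv : deg P v = 1%N by apply/eqP; rewrite eqn_leq -{1}D deg_le (deg_ge1 Hv).
  by rewrite dv (deg1_P1 dv Hv); lra.
have Hb v : bcoef v u <= ((0 < P v u)%R)%:R + ((max_deg P)%:R - 2%:R) * P v u.
  rewrite /bcoef; case: ifP => Hv.
    rewrite lerD2l ler_wpM2r ?P_ge0 // lerB // ler_nat; exact: deg_le.
  have -> : P v u = 0 by apply/eqP; rewrite eq_le P_ge0 // andbT leNgt Hv.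
  by rewrite mulr0 addr0.
apply: le_trans (ler_sum _ (fun v _ => Hb v)) _.
rewrite big_split /= -mulr_sumr.
have c1 : \sum_v (((0 < P v u)%R)%:R : R) <= (max_deg P)%:R.
  have -> : \sum_v (((0 < P v u)%R)%:R : R) = (#|[set v | (0 < P v u)%R]|)%:R.
    rewrite -sum1dep_card natr_sum [RHS]big_mkcond /=.
    by apply: eq_bigr => v _; case: ifP.
  by rewrite ler_nat indeg_le.
have c2 := colsum_le Pst Pirr Hpi Hrev u.
have d2 : (2%:R : R) <= (max_deg P)%:R by rewrite ler_nat.
nra.
Qed.

End Deg.


Section Router.
Variables (R : realFieldType) (n : nat) (P : 'M[R]_n.+1) (pi : 'rV[R]_n.+1).
Local Notation V := 'I_n.+1.
Variables (sigma : V -> nat -> V) (chi0 : V -> nat).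
Hypothesis Pst : stochastic P.
Hypothesis Hbil : billiard_router P sigma.

Local Notation c t := (chi sigma chi0 t).
Definition Sst t := (router_state sigma chi0 t).2.

Lemma chi_succ t u :
  c t.+1 u = (\sum_v Icount sigma v u (Sst t v) (Sst t v + c t v))%N.
Proof. by rewrite /chi /Sst /=; case: (router_state sigma chi0 t). Qed.

Lemma Icount_sum v a k : (\sum_u Icount sigma v u a (a + k))%N = k.
Proof.
rewrite /Icount exchange_big /= (eq_bigr (fun _ => 1%N)).
  by rewrite sum_nat_const_nat muln1 addKn.
move=> j _; rewrite (bigD1 (sigma v j)) //= eqxx big1 // => u /negbTE.
by rewrite eq_sym => ->.
Qed.

Definition e t (u : V) : R := (c t.+1 u)%:R - \sum_v (c t v)%:R * P v u.

Lemma e_sum t : \sum_u e t u = 0.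
Proof.
rewrite sumrB; apply/eqP; rewrite subr_eq0; apply/eqP.
under eq_bigr do rewrite chi_succ natr_sum.
rewrite exchange_big /= [RHS]exchange_big /=; apply: eq_bigr => v _.
by rewrite -natr_sum Icount_sum -mulr_sumr P_row // mulr1.
Qed.

Lemma e_bound t u : `|e t u| <= \sum_v bcoef P v u.
Proof.
rewrite /e chi_succ natr_sum -sumrB; apply: (le_trans (ler_norm_sum _ _ _)).
apply: ler_sum => v _; rewrite /bcoef; case: ifP => Hv.
  exact: disc.
rewrite (Icount_out Hbil) ?Hv //.
have -> : P v u = 0 by apply/eqP; rewrite eq_le P_ge0 // andbT leNgt Hv.
by rewrite mulr0 subrr normr0.
Qed.

Definition xv t : 'rV[R]_n.+1 := \row_u ((c t u)%:R : R).
Definition errv t : 'rV[R]_n.+1 := \row_u e t u.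

Lemma x_succ t : xv t.+1 = xv t *m P + errv t.
Proof.
apply/rowP => u; rewrite !mxE /e; under [X in _ = X + _]eq_bigr do rewrite mxE.
by rewrite addrC subrK.
Qed.

Lemma unroll T :
  xv T = xv 0 *m P ^+ T + \sum_(i < T) errv (T.-1 - i) *m P ^+ i.
Proof.
elim: T => [|T IH]; first by rewrite big_ord0 expr0 mulmx1 addr0.
have EP k : P ^+ k *m P = P ^+ k.+1 by rewrite exprSr mulmxE.
rewrite x_succ IH mulmxDl mulmx_suml -mulmxA EP.
rewrite big_ord_recl /= subn0 expr0 mulmx1 -addrA; congr (_ + _).
rewrite addrC; congr (_ + _); apply: eq_bigr => i _.
by rewrite -mulmxA EP /= subnS predn_sub.
Qed.

End Router.


Unset Implicit Arguments. Set Strict Implicit. Set Printing Implicit Defensive.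

Theorem theorem5p4 (R : realFieldType) (n : nat)
  (P : 'M[R]_n.+1) (pi : 'rV[R]_n.+1) (tstar : nat)
  (sigma : 'I_n.+1 -> nat -> 'I_n.+1) (chi0 : 'I_n.+1 -> nat) :
  stochastic P -> ergodic P -> stationary_distribution P pi ->
  reversible P pi -> is_mixing_rate P pi tstar ->
  billiard_router P sigma ->
  forall (w : 'I_n.+1) (T : nat),
    `| (chi sigma chi0 T w)%:R - mu P chi0 T 0 w |
      <= 6%:R * pi 0 w / pi_min pi * tstar%:R * ((max_deg P)%:R - 1).
Proof.
move=> Pst [Pirr _] Hpi Hrev Hmix Hbil w T.
pose K : R := 2%:R * ((max_deg P)%:R - 1).
pose r : R := pi 0 w / pi_min pi.
have pm0 := pimin_gt0 Pst Pirr Hpi.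
have K0 : 0 <= K.
  have : (1%:R : R) <= (max_deg P)%:R by rewrite ler_nat (maxdeg_ge1 Pst).
  rewrite /K => ?; lra.
have r0 : 0 <= r by rewrite /r divr_ge0 // ?ltW // (pi_gt0 Pst Pirr Hpi).
have Hdiff : (chi sigma chi0 T w)%:R - mu P chi0 T 0 w =
    \sum_(i < T) \sum_u e P sigma chi0 (T.-1 - i) u * ((P ^+ i) u w - pi 0 w).
  have := congr1 (fun M : 'rV[R]_n.+1 => M 0 w) (unroll P sigma chi0 T).
  rewrite /xv mxE [in X in _ = X -> _]mxE summxE => ->.
  rewrite /mu (_ : chi sigma chi0 0 = chi0) // addrAC subrr add0r; apply: eq_bigr => i _; rewrite mxE.
  under eq_bigr do rewrite mxE.
  under [RHS]eq_bigr do rewrite mulrBr.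
  rewrite sumrB -mulr_suml e_sum // mul0r subr0 //.
have Hterm k i u :
    `|e P sigma chi0 k u * ((P ^+ i) u w - pi 0 w)| <=
    K * r * `|(P ^+ i) w u - pi 0 u|.
  have piu := pi_gt0 Pst Pirr Hpi u.
  have piw := pi_gt0 Pst Pirr Hpi w.
  have he : `|e P sigma chi0 k u| <= K * (pi 0 u / pi_min pi).
    apply: le_trans (e_bound chi0 Pst Hbil k u) _.
    exact: (bcoef_sum Pst Pirr Hpi Hrev).
  have hd : pi 0 u * `|(P ^+ i) u w - pi 0 w| = pi 0 w * `|(P ^+ i) w u - pi 0 u|.
    have hd0 : pi 0 u * ((P ^+ i) u w - pi 0 w) = pi 0 w * ((P ^+ i) w u - pi 0 u).
      by rewrite !mulrBr (rev_Pt Hrev i u w); ring.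
    by rewrite -{1}(ger0_norm (ltW piu)) -normrM hd0 normrM ger0_norm // ltW.
  rewrite normrM; apply: le_trans (ler_wpM2r (normr_ge0 _) he) _.
  have -> : K * (pi 0 u / pi_min pi) * `|(P ^+ i) u w - pi 0 w| =
            K / pi_min pi * (pi 0 u * `|(P ^+ i) u w - pi 0 w|) by ring.
  rewrite hd /r le_eqVlt; apply/orP; left; apply/eqP; ring.
rewrite Hdiff.
apply: le_trans (ler_norm_sum _ _ _) _.
apply: (le_trans (y := \sum_(i < T) K * r * A P pi w i)).
  apply: ler_sum => i _; apply: le_trans (ler_norm_sum _ _ _) _.
  rewrite /A mulr_sumr; apply: ler_sum => u _; exact: Hterm.
rewrite -mulr_sumr -(big_mkord xpredT (A P pi w)).
apply: le_trans (ler_wpM2l (mulr_ge0 K0 r0) (A_sum_bound Pst Hpi Hmix w T)) _.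
rewrite /K /r le_eqVlt; apply/orP; left; apply/eqP; ring.
Qed.
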